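(* Let $p$ be an odd prime, $\xi$ a primitive $p$th root of unity, $0\neq n\in\mathbb Z$. Let $(\mathfrak a,a),(\mathfrak a,b)\in I$. Then $[\mathfrak a,a]=[\mathfrak a,b]$ if and only if $a/b\in N(\mathbb Z[1/n][\xi]^* )$.
   Context: $N(x)=x\overline x$ (bar = complex conjugation). $I$ is the set of pairs $(\mathfrak a,a)$ with $\mathfrak a\subseteq\mathbb Z[1/n][\xi]$ an ideal and $0\neq a\in\mathbb Z[1/n][\xi]$ with $\mathfrak a\overline{\mathfrak a}=(a)$; $[\mathfrak a,a]=[\mathfrak b,b]$ means there exist nonzero $\lambda,\mu\in\mathbb Z[1/n][\xi]$ with $\lambda\mathfrak a=\mu\mathfrak b$ and $\lambda\overline\lambda a=\mu\overline\mu b$. *)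

(* Defs.v *)
From mathcomp Require Import all_boot all_algebra all_field.
Set Implicit Arguments. Unset Strict Implicit. Unset Printing Implicit Defensive.
Import GRing.Theory Num.Theory.
Local Open Scope ring_scope.

(* Everything lives inside algC (algebraic complex numbers); x^* is complex
   conjugation.  Subsets of algC are predicates algC -> Prop. *)

Definition ZinvN (n : int) (x : algC) : Prop :=
  exists (z : int) (k : nat), x = z%:~R / (n%:~R) ^+ k.

Definition Rn (n : int) (xi : algC) (x : algC) : Prop :=
  exists (m : nat) (c : nat -> algC),
    (forall i, ZinvN n (c i)) /\ x = \sum_(i < m) c i * xi ^+ i.

Definition isIdeal (n : int) (xi : algC) (A : algC -> Prop) : Prop :=
  [/\ forall x, A x -> Rn n xi x,
      A 0,
      forall x y, A x -> A y -> A (x + y)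
    & forall r x, Rn n xi r -> A x -> A (r * x)].

Definition idealMul (A B : algC -> Prop) : algC -> Prop :=
  fun x => exists (m : nat) (u v : nat -> algC),
    [/\ forall i, A (u i), forall i, B (v i) & x = \sum_(i < m) u i * v i].

Definition idealConj (A : algC -> Prop) : algC -> Prop := fun x => A (x^*).

Definition principal (n : int) (xi : algC) (a : algC) : algC -> Prop :=
  fun x => exists r, Rn n xi r /\ x = r * a.

Definition scaleSet (l : algC) (A : algC -> Prop) : algC -> Prop :=
  fun x => exists y, A y /\ x = l * y.

Definition setEq (A B : algC -> Prop) : Prop := forall x, A x <-> B x.

Definition inI (n : int) (xi : algC) (A : algC -> Prop) (a : algC) : Prop :=
  [/\ isIdeal n xi A, Rn n xi a, a != 0
    & setEq (idealMul A (idealConj A)) (principal n xi a)].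

Definition classEq (n : int) (xi : algC) (A : algC -> Prop) (a : algC)
    (B : algC -> Prop) (b : algC) : Prop :=
  exists l mu : algC,
    [/\ Rn n xi l, Rn n xi mu, l != 0, mu != 0
      & setEq (scaleSet l A) (scaleSet mu B) /\ l * l^* * a = mu * mu^* * b].

Definition isUnitR (n : int) (xi : algC) (u : algC) : Prop :=
  Rn n xi u /\ exists v, Rn n xi v /\ u * v = 1.

Definition inNormUnits (n : int) (xi : algC) (x : algC) : Prop :=
  exists u, isUnitR n xi u /\ x = u * u^*.

(* Main.v *)
Require Import Defs.
From mathcomp Require Import all_boot all_algebra all_field.
From Stdlib Require Import ClassicalEpsilon.
Import GRing.Theory Num.Theory.
Local Open Scope ring_scope.

Lemma Rn1 n xi : Rn n xi 1.
Proof.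
exists 1%N, (fun _ => 1); split.
  by move=> i; exists 1, 0%N; rewrite expr0 divr1.
by rewrite big_ord1 expr0 mulr1.
Qed.

Lemma scale_div n xi A a l mu :
  inI n xi A a -> setEq (scaleSet l A) (scaleSet mu A) ->
  exists r, Rn n xi r /\ l = mu * r.
Proof.
case=> hI hRa a0 hE hS.
have [m [u [v [hu hv ea]]]] : idealMul A (idealConj A) a.
  by apply/hE; exists 1; split; [exact: Rn1 | rewrite mul1r].
have H i : exists y, A y /\ l * u i = mu * y.
  by apply/hS; exists (u i).
pose w i := proj1_sig (constructive_indefinite_description _ (H i)).
have hw i : A (w i) /\ l * u i = mu * w i.
  exact: (proj2_sig (constructive_indefinite_description _ (H i))).
have [r [hr er]] : principal n xi a (\sum_(i < m) w i * v i).
  by apply/hE; exists m, w, v; split => // i; case: (hw i).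
exists r; split => //.
apply: (mulIf a0).
rewrite -mulrA -er mulr_sumr ea mulr_sumr; apply: eq_bigr => i _.
by rewrite mulrA (proj2 (hw i)) mulrA.
Qed.

Theorem lemma3p9 (p : nat) (xi : algC) (n : int) (A : algC -> Prop) (a b : algC) :
  prime p -> odd p -> p.-primitive_root xi -> n != 0 ->
  inI n xi A a -> inI n xi A b ->
  (classEq n xi A a A b <-> inNormUnits n xi (a / b)).
Proof.
move=> _ _ _ _ hIa hIb; split.
  case=> l [mu [hl hmu l0 mu0 [hS hN]]].
  have [r [hr er]] := @scale_div n xi A a l mu hIa hS.
  have hS' : setEq (scaleSet mu A) (scaleSet l A) by move=> x; split; move/hS.
  have [s [hs es]] := @scale_div n xi A a mu l hIa hS'.
  have sr : s * r = 1.
    apply: (mulfI l0); rewrite mulr1 {2}er es -mulrA; done.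
  exists s; split; first by split => //; exists r.
  case: hIb => _ _ b0 _.
  have ll0 : l * l^* != 0 by rewrite mulf_neq0 // conjC_eq0.
  apply: (mulIf b0); rewrite divfK //.
  apply: (mulfI ll0); rewrite hN es rmorphM /=.
  by rewrite mulrACA [RHS]mulrA.
case=> u [[hu [v [hv uv]]] e].
case: hIa => [[hsub h0 hadd hmul] _ _ _].
case: hIb => _ _ b0 _.
exists 1, u; split => //; first exact: Rn1.
- by rewrite oner_eq0.
- by apply/negP => /eqP u0; move: uv; rewrite u0 mul0r => /eqP; rewrite eq_sym oner_eq0.
split.
  move=> x; split.
    case=> y [Ay ->]; exists (v * y); split; first exact: hmul.
    by rewrite mulrA uv.
  case=> y [Ay ->]; exists (u * y); split; first exact: hmul.
  by rewrite mul1r.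
by rewrite rmorph1 !mul1r -e divfK.
Qed.
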